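(* Let $(D(t),\,t\ge0)$ be a random nonnegative demand process (with locally integrable paths), let the initial energy configuration be given, and let $T\in(0,\infty]$. The GGDDF policy is non-anticipatory: its rates at each time $t$ depend only on $D(t)$ and on the current stored energies $(E_i(t),\,i\in\mathcal S)$. Moreover, for every discharge-only policy $\pi$ that is non-anticipatory (its rates at time $t$ depend only on $(D(s),\,s\le t)$), the unserved energy $U_{\mathrm{GGDDF}}$ over $[0,T]$ under GGDDF satisfies $U_{\mathrm{GGDDF}}\le U_\pi$ almost surely; consequently GGDDF minimises the expectation of the unserved energy over $[0,T]$ and, for every $q\in(0,1)$, the $q$-quantile of its distribution, among all such policies.
   Context: A finite set $\mathcal S$ of energy stores is given. Store $i\in\mathcal S$ has capacity $\overline E_i>0$ and maximum discharge rate $P_i>0$. A (discharge-only) policy is a choice of measurable rate functions $(r_i(t),\,t\ge0)$, $i\in\mathcal S$, with stored energies $E_i(t)=E_i(0)-\int_0^t r_i(u)\,du$, subject to $0\le E_i(t)\le\overline E_i$, $0\le r_i(t)\le P_i$ and $\sum_{i\in\mathcal S}r_i(t)\le d(t)$ for all $t\ge0$, where $(d(t),\,t\ge0)$ is a nonnegative demand function. The unserved energy over $[0,T]$ is $\int_0^T\max\bigl(d(t)-\sum_{i}r_i(t),0\bigr)dt$. GGDDF (greedy greatest-discharge-duration-first) policy: at (almost) every time $t$, the total served rate is $\bar d(t)=\min\bigl(d(t),\sum_{i:E_i(t)>0}P_i\bigr)$, and it is allocated as follows: the nonempty stores are partitioned into groups $G_1,G_2,\dots$ of equal discharge-duration $E_i(t)/P_i$,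 listed in strictly decreasing order of that duration; letting $m$ be the least index with $\sum_{k\le m}\sum_{i\in G_k}P_i\ge\bar d(t)$, every store in $G_k$ with $k<m$ discharges at rate $P_i$, every store $i\in G_m$ discharges at rate $\lambda P_i$ with $\lambda\in(0,1]$ chosen so that $\sum_i r_i(t)=\bar d(t)$, and all other stores have rate $0$ (all rates are $0$ if $\bar d(t)=0$). *)

(* Defs.v *)
From HB Require Import structures.
From mathcomp Require Import all_boot all_order all_algebra.
From mathcomp Require Import all_classical all_reals all_analysis measurable_realfun.
Set Implicit Arguments. Unset Strict Implicit. Unset Printing Implicit Defensive.
Import Order.TTheory GRing.Theory Num.Theory.
Import numFieldNormedType.Exports.
Local Open Scope classical_set_scope.
Local Open Scope ring_scope.

Section Model.
Variables (R : realType) (S : finType).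
Variables (Ebar P : S -> R).
Variable E0 : S -> R.

Definition energy (r : S -> R -> R) (i : S) (t : R) : R :=
  E0 i - (\int[@lebesgue_measure R]_(u in `[0, t]) r i u).

Definition is_policy (d : R -> R) (r : S -> R -> R) : Prop :=
  (forall i, measurable_fun [set t : R | 0 <= t] (r i)) /\
  (forall t, 0 <= t ->
     [/\ forall i, 0 <= energy r i t <= Ebar i,
         forall i, 0 <= r i t <= P i &
         \sum_i r i t <= d t]).

Definition served_rate (dt : R) (E : S -> R) : R :=
  Num.min dt (\sum_(i | 0 < E i) P i).

(* the GGDDF allocation rule at one time instant, given the demand value dt
   and the stored energies E; the groups G_1, G_2, ... are the level sets of
   the discharge duration E i / P i among nonempty stores; G_m is the level
   set of duration tau, and G_1..G_{m-1} are the nonempty stores with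
   strictly greater duration. *)
Definition ggddf_alloc (dt : R) (E : S -> R) (r : S -> R) : Prop :=
  let db := served_rate dt E in
  if db == 0 then forall i, r i = 0 else
  exists tau lambda,
    [/\ exists j, 0 < E j /\ E j / P j = tau,
        0 < lambda <= 1,
        \sum_(i | (0 < E i) && (tau < E i / P i)) P i < db
          <= \sum_(i | (0 < E i) && (tau <= E i / P i)) P i,
        forall i, r i = (if (0 < E i) && (tau < E i / P i) then P i
                         else if (0 < E i) && (E i / P i == tau)
                              then lambda * P i else 0) &
        \sum_i r i = db].

Definition is_ggddf (d : R -> R) (r : S -> R -> R) : Prop :=
  is_policy d r /\
  {ae @lebesgue_measure R, forall t, 0 <= t ->
      ggddf_alloc (d t) (energy r ^~ t) (r ^~ t)}.

Definition window (T : \bar R) : set R := [set t | 0 <= t /\ (t%:E <= T)%E].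

Definition unserved (d : R -> R) (r : S -> R -> R) (T : \bar R) : \bar R :=
  (\int[@lebesgue_measure R]_(t in window T)
      (Num.max (d t - \sum_i r i t) 0)%:E)%E.
End Model.

(* lower q-quantile of an extended-real random variable X:
   inf { x in R | P[X <= x] >= q } (= +oo if that set is empty) *)
Definition quantile (R : realType) (d : measure_display) (Om : measurableType d)
  (Pr : probability Om R) (X : Om -> \bar R) (q : R) : \bar R :=
  ereal_inf [set x%:E | x in [set x : R | (q%:E <= Pr [set w | (X w <= x%:E)%E])%E]].

(* Main.v *)
Require Import Defs.
From HB Require Import structures.
From mathcomp Require Import all_boot all_order all_algebra.
From mathcomp Require Import all_classical all_reals all_analysis measurable_realfun.
From mathcomp Require Import ring lra.
Import Order.TTheory GRing.Theory Num.Theory.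
Import numFieldNormedType.Exports.
Local Open Scope classical_set_scope.
Local Open Scope ring_scope.
Set Implicit Arguments. Unset Strict Implicit.

Section Basics.
Variables (R : realType) (S : finType) (Ebar P E0 : S -> R).
Hypothesis hP : forall i, 0 < P i.
Local Notation mu := (@lebesgue_measure R).

Lemma itv_c_sub (a b : R) : 0 <= a -> `[a, b]%classic `<=` [set t : R | 0 <= t].
Proof. by move=> a0 x /=; rewrite in_itv /= => /andP[ax _]; apply: le_trans ax. Qed.

Lemma itv_oc_sub (a b : R) : 0 <= a -> `]a, b]%classic `<=` [set t : R | 0 <= t].
Proof. by move=> a0 x /=; rewrite in_itv /= => /andP[ax _]; apply: le_trans (ltW ax). Qed.

Lemma meas_nonneg : measurable [set t : R | 0 <= t].
Proof.
have -> : [set t : R | 0 <= t] = `[0, +oo[%classic.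
  by apply/seteqP; split => x /=; rewrite in_itv /= andbT.
exact: measurable_itv.
Qed.

Lemma mu_itv_fin (a b : R) : (mu `[a, b]%classic < +oo)%E.
Proof. by rewrite lebesgue_measure_itv; case: ifP => //= _; rewrite -EFinD ltry. Qed.

Lemma mu_itv_oc_fin (a b : R) : (mu `]a, b]%classic < +oo)%E.
Proof. by rewrite lebesgue_measure_itv; case: ifP => //= _; rewrite -EFinD ltry. Qed.

Lemma mu_oc (s t : R) : s <= t -> fine (mu `]s, t]%classic) = t - s.
Proof.
rewrite lebesgue_measure_itv /= lte_fin le_eqVlt => /predU1P[->|->//].
by rewrite ltxx subrr.
Qed.

Lemma pol_int d q (i : S) (A : set R) : is_policy Ebar P E0 d q -> measurable A ->
  A `<=` [set t : R | 0 <= t] -> (mu A < +oo)%E -> mu.-integrable A (EFin \o q i).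
Proof.
move=> [mq hq] mA A0 Afin.
have mqA : measurable_fun A (q i) by apply: measurable_funS (mq i); [exact: meas_nonneg|].
apply/integrableP; split; first exact/measurable_EFinP.
apply: (@le_lt_trans _ _ (\int[mu]_(x in A) (cst (P i)%:E) x)%E).
  apply: ge0_le_integral => //.
  - by apply/measurableT_comp => //; apply/measurable_EFinP.
  - move=> x Ax /=; have [_ /(_ i) /andP[q0 qP] _] := hq x (A0 x Ax).
    by rewrite lee_fin ger0_norm.
rewrite integral_cst //; apply: lte_mul_pinfty => //.
by rewrite lee_fin ltW.
Qed.

Lemma pol_ge0 d q i t : is_policy Ebar P E0 d q -> 0 <= t -> 0 <= q i t.
Proof. by move=> [_ hq] t0; have [_ /(_ i) /andP[]] := hq t t0. Qed.

Lemma pol_leP d q i t : is_policy Ebar P E0 d q -> 0 <= t -> q i t <= P i.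
Proof. by move=> [_ hq] t0; have [_ /(_ i) /andP[]] := hq t t0. Qed.

Lemma pol_int_itv d q i (a b : R) : is_policy Ebar P E0 d q -> 0 <= a ->
  mu.-integrable `[a, b]%classic (EFin \o q i).
Proof.
move=> hq a0; apply: (@pol_int d q i _ hq) => //; first exact: (@itv_c_sub a b a0).
exact: mu_itv_fin.
Qed.

Lemma pol_int_itv_oc d q i (a b : R) : is_policy Ebar P E0 d q -> 0 <= a ->
  mu.-integrable `]a, b]%classic (EFin \o q i).
Proof.
move=> hq a0; apply: (@pol_int d q i _ hq) => //; first exact: (@itv_oc_sub a b a0).
exact: mu_itv_oc_fin.
Qed.

Lemma energy_diff d q i (s t : R) : is_policy Ebar P E0 d q -> 0 <= s <= t ->
  energy E0 q i s - energy E0 q i t = \int[mu]_(u in `]s, t]) q i u.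
Proof.
move=> hq /andP[s0 st]; rewrite /energy.
rewrite (_ : forall x y z : R, x - y - (x - z) = z - y); last by move=> *; ring.
rewrite (@Rintegral_itvB _ _ (BLeft 0) (BRight t) s) //.
- exact: (@pol_int_itv d q i 0 t hq (lexx 0)).
Qed.

Lemma Rint_oc_bound d q i (s t : R) : is_policy Ebar P E0 d q -> 0 <= s <= t ->
  0 <= \int[mu]_(u in `]s, t]) q i u <= P i * (t - s).
Proof.
move=> hq /andP[s0 st]; apply/andP; split.
  by apply: Rintegral_ge0 => x /itv_oc_sub -/(_ s0) x0; apply: pol_ge0 hq x0.
apply: le_trans (_ : \int[mu]_(u in `]s, t]) P i <= _).
  apply: le_Rintegral => //.
  - exact: (@pol_int_itv_oc d q i s t hq s0).
  - apply: (measurable_bounded_integrable) => //; first exact: mu_itv_oc_fin.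
    by apply: bounded_cst.
  - by move=> x /itv_oc_sub -/(_ s0) x0; apply: pol_leP hq x0.
by rewrite Rintegral_cst // mu_oc.
Qed.
End Basics.

Unset Implicit Arguments.
Section Alloc.
Variables (R : realType) (S : finType) (P : S -> R).
Hypothesis hP : forall i, 0 < P i.

Lemma exmin (Q : pred S) (F : S -> R) {i0} : Q i0 ->
  exists k, Q k /\ forall i, Q i -> F k <= F i.
Proof. move=> Qi0; case: (arg_minP F Qi0) => k Qk Hk; by exists k. Qed.

Lemma exmax (Q : pred S) (F : S -> R) {i0} : Q i0 ->
  exists k, Q k /\ forall i, Q i -> F i <= F k.
Proof. move=> Qi0; case: (arg_maxP F Qi0) => k Qk Hk; by exists k. Qed.

Lemma sumP_ge0 (Q : pred S) : 0 <= \sum_(i | Q i) P i.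
Proof. by apply: sumr_ge0 => i _; apply: ltW. Qed.

Lemma sumP_sub {Q1 Q2 : pred S} : (forall i, Q1 i -> Q2 i) ->
  \sum_(i | Q1 i) P i <= \sum_(i | Q2 i) P i.
Proof.
move=> H; rewrite [leRHS](bigID Q1) /=.
rewrite (eq_bigl Q1); last by move=> i; apply/andP/idP => [[]//|h]; split=> //; exact: H.
by rewrite lerDl sumP_ge0.
Qed.

Lemma sumP_pos {Q : pred S} : 0 < \sum_(i | Q i) P i -> exists i, Q i.
Proof.
move=> h; case: (pickP Q) => [i Qi|Q0]; first by exists i.
by move: h; rewrite big_pred0 // ltxx.
Qed.

Lemma alloc_sum (E : S -> R) t l0 :
   \sum_i (if (0 < E i) && (t < E i / P i) then P i
                         else if (0 < E i) && (E i / P i == t)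
                              then l0 * P i else 0) =
   \sum_(i | (0 < E i) && (t < E i / P i)) P i
      + l0 * \sum_(i | (0 < E i) && (E i / P i == t)) P i.
Proof.
  rewrite (bigID (fun i => (0 < E i) && (t < E i / P i))) /=; congr (_ + _).
    by apply: eq_bigr => i ->.
  rewrite mulr_sumr [RHS](bigID (fun i => (0 < E i) && (t < E i / P i))) /=.
  rewrite [X in _ = X + _]big1 ?add0r; last first.
    by move=> i /andP[/andP[_ /eqP ->] /andP[_]]; rewrite ltxx.
  rewrite big_mkcond [RHS]big_mkcond /=; apply: eq_bigr => i _.
  case: (0 < E i) => //=; case: (ltgtP t (E i / P i)) => //=.
Qed.

Lemma alloc_exists dt (E : S -> R) : 0 <= dt -> exists r, ggddf_alloc P dt E r.
Proof.
move=> hdt; rewrite /ggddf_alloc /=.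
set db := served_rate P dt E.
have db_ge0 : 0 <= db by rewrite /db /served_rate le_min hdt sumP_ge0.
case: eqP => [_|/eqP db0]; first by exists (fun _ => 0).
have dbpos : 0 < db by rewrite lt_neqAle eq_sym db0.
have dbN : db <= \sum_(i | 0 < E i) P i by rewrite /db /served_rate ge_min lexx orbT.
pose tau i := E i / P i.
have [j1 Nj1] : exists j, 0 < E j by apply: sumP_pos; exact: lt_le_trans dbN.
have [jm [Njm Hjm]] := exmin (fun i => 0 < E i) tau Nj1.
pose J := fun j => (0 < E j) && (db <= \sum_(i | (0 < E i) && (tau j <= tau i)) P i).
have Jjm : J jm.
  rewrite /J Njm /=; apply: (le_trans dbN); apply: sumP_sub => i Ni.
  by rewrite Ni Hjm.
have [k [Jk Hk]] := exmax J tau Jjm.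
case/andP: Jk => Nk dbk.
have gt_lt : \sum_(i | (0 < E i) && (tau k < tau i)) P i < db.
  rewrite ltNge; apply/negP => hge.
  have [k1 /andP[Nk1 tk1]] := sumP_pos (lt_le_trans dbpos hge).
  have [m [/andP[Nm tm] Hm]] := exmin (fun i => (0 < E i) && (tau k < tau i)) tau
      (introT andP (conj Nk1 tk1)).
  have Jm : J m.
    rewrite /J Nm /=; apply: (le_trans hge); apply: sumP_sub => i /andP[Ni ti].
    by rewrite Ni Hm // Ni ti.
  by move: (Hk m Jm); rewrite leNgt tm.
pose sg := \sum_(i | (0 < E i) && (tau k < tau i)) P i.
pose se := \sum_(i | (0 < E i) && (tau i == tau k)) P i.
have sge_split : \sum_(i | (0 < E i) && (tau k <= tau i)) P i = sg + se.
  rewrite (bigID (fun i => tau k < tau i)) /=; congr (_ + _).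
    apply: eq_bigl => i; case: (ltgtP (tau k) (tau i)); rewrite ?andbT ?andbF //=.
  apply: eq_bigl => i; case: (ltgtP (tau k) (tau i)); rewrite ?andbT ?andbF ?eqxx //=.
have se_pos : 0 < se.
  rewrite /se (bigD1 k) /=; last by rewrite Nk eqxx.
  by rewrite ltr_pwDl ?hP // sumP_ge0.
pose lambda := (db - sg) / se.
exists (fun i => if (0 < E i) && (tau k < tau i) then P i
            else if (0 < E i) && (E i / P i == tau k) then lambda * P i else 0).
exists (tau k), lambda; split.
- by exists k; split.
- apply/andP; split; first by rewrite /lambda divr_gt0 // subr_gt0.
  rewrite /lambda ler_pdivrMr // mul1r lerBlDl -sge_split //.
- by apply/andP; split => //; rewrite /sg in gt_lt; rewrite -/tau.
- by [].
- rewrite -/tau.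
  rewrite (alloc_sum E (tau k) lambda) -/sg -/se.
  by rewrite /lambda mulfVK ?subrKC // gt_eqF.
Qed.

Lemma alloc_unique dt (E : S -> R) r r' :
  ggddf_alloc P dt E r -> ggddf_alloc P dt E r' -> forall i, r i = r' i.
Proof.
rewrite /ggddf_alloc /=.
case: eqP => [_ h h' i|_]; first by rewrite h h'.
move=> [t [l [[j [Nj tj]] _ /andP[gt ge] hr sr]]].
move=> [t' [l' [[j' [Nj' tj']] _ /andP[gt' ge'] hr' sr']]].
set db := served_rate P dt E in gt ge sr gt' ge' sr'.
have tt' : t = t'.
  apply/eqP; rewrite eq_le; apply/andP; split; rewrite leNgt; apply/negP => hlt.
  - have h : \sum_(i | (0 < E i) && (t <= E i / P i)) P i <=
               \sum_(i | (0 < E i) && (t' < E i / P i)) P i.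
      by apply: sumP_sub => i /andP[-> h]; apply: lt_le_trans h.
    by have := le_lt_trans ge (le_lt_trans h gt'); rewrite ltxx.
  - have h : \sum_(i | (0 < E i) && (t' <= E i / P i)) P i <=
               \sum_(i | (0 < E i) && (t < E i / P i)) P i.
      by apply: sumP_sub => i /andP[-> h]; apply: lt_le_trans h.
    by have := le_lt_trans ge' (le_lt_trans h gt); rewrite ltxx.
move: hr'; rewrite -tt' => hr'.
pose sg := \sum_(i | (0 < E i) && (t < E i / P i)) P i.
pose se := \sum_(i | (0 < E i) && (E i / P i == t)) P i.
have key : forall l0 r0, (forall i, r0 i = (if (0 < E i) && (t < E i / P i) then P i
                         else if (0 < E i) && (E i / P i == t)
                              then l0 * P i else 0)) ->
   \sum_i r0 i = sg + l0 * se.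
  by move=> l0 r0 hr0; rewrite (eq_bigr _ (fun i _ => hr0 i)) alloc_sum.
have se_pos : 0 < se.
  rewrite /se (bigD1 j) /=; last by rewrite Nj tj eqxx.
  by rewrite ltr_pwDl ?hP // sumP_ge0.
have ll' : l = l'.
  have := key _ _ hr; have := key _ _ hr'; rewrite sr sr' => -> /addrI.
  by move/(mulIf (lt0r_neq0 se_pos)).
by move=> i; rewrite hr hr' ll'.
Qed.
End Alloc.
Set Implicit Arguments. Unset Strict Implicit.

Section AllocFacts.
Variables (R : realType) (S : finType) (P : S -> R).
Hypothesis hP : forall i, 0 < P i.

Lemma alloc_empty dt (E r : S -> R) i : ggddf_alloc P dt E r -> ~~ (0 < E i) -> r i = 0.
Proof.
rewrite /ggddf_alloc /=; case: eqP => [_ h _|_]; first exact: h.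
move=> [t [l [_ _ _ hr _]]] /negbTE Ei; by rewrite hr Ei.
Qed.

Lemma alloc_sumr dt (E r : S -> R) : ggddf_alloc P dt E r -> \sum_i r i = served_rate P dt E.
Proof.
rewrite /ggddf_alloc /=; case: eqP => [/eqP /eqP -> h|_].
  by rewrite big1.
by move=> [t [l [_ _ _ _ ->]]].
Qed.

Lemma alloc_full dt (E r : S -> R) i j : ggddf_alloc P dt E r ->
  0 < r i -> 0 < E j -> E i / P i < E j / P j -> r j = P j.
Proof.
rewrite /ggddf_alloc /=; case: eqP => [_ h|_].
  by rewrite h ltxx.
move=> [t [l [_ _ _ hr _]]] ri Ej tij.
rewrite hr Ej /=; case: ifP => // /negbT; rewrite -leNgt => tjt.
move: ri; rewrite hr; case: ifP => [/andP[_ ti]|_].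
  by have := lt_le_trans (lt_trans ti tij) tjt; rewrite ltxx.
case: ifP => [/andP[_ /eqP ti]|_]; last by rewrite ltxx.
by move: tij; rewrite ti ltNge tjt.
Qed.

Lemma alloc_served dt (E r : S -> R) j : ggddf_alloc P dt E r ->
  (forall i, r i <= P i) -> 0 < E j -> r j != P j -> \sum_i r i = dt.
Proof.
move=> ha rP Ej rj; have := alloc_sumr ha; rewrite /served_rate.
case: leP => [_ -> //|hlt hs].
exfalso; move/negP: rj; apply; apply/eqP.
have : \sum_(i | 0 < E i) (P i - r i) = 0.
  rewrite sumrB -hs [X in X - _](bigID (fun i => 0 < E i)) /=.
  rewrite [X in _ + X - _]big1 ?addr0 ?subrr // => i /negbTE Ei.
  by apply: (alloc_empty ha); rewrite Ei.
move/eqP; rewrite psumr_eq0 => [/allP /(_ j (mem_index_enum _))|i _]; last by rewrite subr_ge0.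
by rewrite Ej /= subr_eq0 => /eqP ->.
Qed.
End AllocFacts.

Section IntFacts.
Variable (R : realType).
Local Notation mu := (@lebesgue_measure R).

Lemma le_Rint_ae (D : set R) (f g : R -> R) : measurable D ->
  mu.-integrable D (EFin \o f) -> mu.-integrable D (EFin \o g) ->
  (forall x, D x -> 0 <= f x) -> (forall x, D x -> 0 <= g x) ->
  (exists N, [/\ measurable N, mu N = 0%E & forall x, D x -> ~ N x -> f x <= g x]) ->
  \int[mu]_(x in D) f x <= \int[mu]_(x in D) g x.
Proof.
move=> mD inf ing f0 g0 [N [mN N0 H]].
rewrite /Rintegral fine_le //; try exact: integrable_fin_num.
apply: (@ae_ge0_le_integral _ _ _ mu D mD (fun x => (f x)%:E) (fun x => (g x)%:E)).
- by move=> x Dx /=; rewrite lee_fin f0.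
- exact: measurable_int inf.
- by move=> x Dx /=; rewrite lee_fin g0.
- exact: measurable_int ing.
exists N; split => // x /= Hn; apply: contrapT => Nx; apply: Hn => Dx.
by rewrite lee_fin; exact: H.
Qed.
Lemma int_scale (D : set R) (f : R -> R) k : measurable D ->
  mu.-integrable D (EFin \o f) -> mu.-integrable D (EFin \o (fun x => f x * k)).
Proof.
move=> mD h; have := @integrableZr _ _ _ mu D mD k _ h.
by apply: eq_integrable => // x _; rewrite /= EFinM.
Qed.
End IntFacts.

Section Energy.
Variables (R : realType) (S : finType) (Ebar P E0 : S -> R).
Hypothesis hP : forall i, 0 < P i.
Local Notation mu := (@lebesgue_measure R).
Variables (d : R -> R) (q : S -> R -> R).
Hypothesis hq : is_policy Ebar P E0 d q.

Lemma E_ge0 i t : 0 <= t -> 0 <= energy E0 q i t.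
Proof. by move=> t0; have [/(_ i) /andP[]] := hq.2 t t0. Qed.

Lemma E_dec i s t : 0 <= s <= t -> 0 <= energy E0 q i s - energy E0 q i t <= P i * (t - s).
Proof. by move=> h; rewrite (energy_diff hP i hq h); exact: (Rint_oc_bound hP i hq h). Qed.

Lemma E_mono i s t : 0 <= s <= t -> energy E0 q i t <= energy E0 q i s.
Proof. by move=> /(E_dec i) /andP[]; rewrite subr_ge0. Qed.

Lemma tau_dec i s t : 0 <= s <= t ->
  0 <= energy E0 q i s / P i - energy E0 q i t / P i <= t - s.
Proof.
move=> /(E_dec i) /andP[h1 h2]; rewrite -mulrBl; apply/andP; split.
  by rewrite divr_ge0 // ltW.
by rewrite ler_pdivrMr // mulrC.
Qed.
End Energy.

Section Tie.
Variables (R : realType) (S : finType) (Ebar P E0 : S -> R).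
Hypothesis hP : forall i, 0 < P i.
Local Notation mu := (@lebesgue_measure R).
Variables (d : R -> R) (r : S -> R -> R).
Hypothesis hr : is_ggddf Ebar P E0 d r.
Local Notation E := (energy E0 r).

Lemma ae_alloc : exists N, [/\ measurable N, mu N = 0%E &
  forall t, 0 <= t -> ~ N t -> ggddf_alloc P (d t) (E ^~ t) (r ^~ t)].
Proof.
have [N [mN N0 HN]] := hr.2.
exists N; split => // t t0 Nt; apply: contrapT => h; apply: Nt; apply: HN.
by move=> /(_ t0).
Qed.

Let hpol := hr.1.

Lemma tie_int i j s v : 0 <= s <= v -> 0 < E j v ->
  (forall u, s < u <= v -> E i u / P i < E j u / P j) ->
  E i s / P i - E j s / P j <= E i v / P i - E j v / P j.
Proof.
move=> /andP[s0 sv] Ejv hlt.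
have eq k : E k s / P k - E k v / P k = \int[mu]_(u in `]s, v]) (r k u / P k).
  rewrite -mulrBl (energy_diff hP k hpol) ?s0 ?sv // RintegralZr //.
  exact: (pol_int_itv_oc hP k v hpol s0).
have : \int[mu]_(u in `]s, v]) (r i u / P i) <= \int[mu]_(u in `]s, v]) (r j u / P j).
  have [N [mN N0 HN]] := ae_alloc.
  have u0 u : `]s, v]%classic u -> 0 <= u.
    by move=> /itv_oc_sub; apply.
  apply: le_Rint_ae => //.
  - apply: int_scale => //; exact: (pol_int_itv_oc hP i v hpol s0).
  - apply: int_scale => //; exact: (pol_int_itv_oc hP j v hpol s0).
  - by move=> u /u0 u00; rewrite divr_ge0 ?(pol_ge0 _ hpol) // ltW.
  - by move=> u /u0 u00; rewrite divr_ge0 ?(pol_ge0 _ hpol) // ltW.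
  exists N; split => // u hu Nu.
  have u00 := u0 u hu.
  have ha := HN u u00 Nu.
  have [ri0|ri0] := eqVneq (r i u) 0.
    by rewrite ri0 mul0r divr_ge0 ?(pol_ge0 _ hpol) // ltW.
  have rj : r j u = P j.
    apply: (alloc_full (i:=i) (j:=j) ha).
    - by rewrite lt_neqAle eq_sym ri0 (pol_ge0 _ hpol).
    - apply: (lt_le_trans Ejv); apply: (E_mono hP hpol).
      by move: hu; rewrite /= in_itv /= => /andP[su ->]; rewrite u00.
    - by apply: hlt; move: hu; rewrite /= in_itv.
  by rewrite rj divff ?gt_eqF // ler_pdivrMr // mul1r (pol_leP _ hpol).
move=> h; have ei := eq i; have ej := eq j.
move: h ei ej.
set a1 := E i s / P i; set a2 := E i v / P i; set b1 := E j s / P j; set b2 := E j v / P j.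
set I1 := Rintegral _ _ _; set I2 := Rintegral _ _ _.
move=> h h1 h2; lra.
Qed.

Lemma tie i j t T : 0 <= t <= T -> E i T <= 0 -> 0 < E j T ->
  E i t / P i < E j t / P j.
Proof.
move=> /andP[t0 tT] EiT EjT.
pose dl u := E i u / P i - E j u / P j.
rewrite -subr_lt0 -/(dl t) ltNge; apply/negP => dt0.
have dT : dl T < 0.
  rewrite /dl subr_lt0 (@le_lt_trans _ _ 0) //; last by rewrite divr_gt0.
  by apply: mulr_le0_ge0 => //; rewrite invr_ge0 ltW.
pose Z := [set u | t <= u <= T /\ 0 <= dl u].
have Zt : Z t by split => //; rewrite lexx tT.
have ubT : ubound Z T by move=> u [/andP[_ ->]].
have hs : has_sup Z by split; [exists t | exists T].
pose s := sup Z.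
have ts : t <= s by apply: sup_upper_bound.
have sT : s <= T by apply: ge_sup => //; exists t.
have s0 : 0 <= s by apply: le_trans ts.
have lip u : 0 <= u <= s -> dl u - (s - u) <= dl s.
  move=> us; have := tau_dec hP hpol i us; have := tau_dec hP hpol j us.
  rewrite /dl; set a1 := E i u / P i; set a2 := E i s / P i.
  set b1 := E j u / P j; set b2 := E j s / P j.
  move=> /andP[h1 h2] /andP[h3 h4]; lra.
have ds : 0 <= dl s.
  rewrite leNgt; apply/negP => dsn.
  have eta0 : 0 < - dl s / 2 by rewrite divr_gt0 // oppr_gt0.
  have [u Zu hu] := sup_adherent eta0 hs.
  have us : u <= s by apply: sup_upper_bound.
  case: Zu => /andP[tu uT] du.
  have := lip u; rewrite (le_trans t0 tu) us => /(_ isT).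
  rewrite -/s in hu; lra.
have H : (forall u, s < u <= T -> E i u / P i < E j u / P j).
  move=> u /andP[su uT]; rewrite -subr_lt0 -/(dl u) ltNge; apply/negP => du.
  have Zu : Z u by split => //; rewrite uT andbT (le_trans ts (ltW su)).
  by have := sup_upper_bound hs Zu; rewrite leNgt su.
have := tie_int (i:=i) (j:=j) (s:=s) (v:=T); rewrite s0 sT EjT => /(_ isT isT H).
rewrite -/(dl s) -/(dl T); lra.
Qed.
End Tie.

Section Main.
Variables (R : realType) (S : finType) (Ebar P E0 : S -> R).
Hypothesis hP : forall i, 0 < P i.
Local Notation mu := (@lebesgue_measure R).
Variables (d : R -> R).
Hypothesis hd0 : forall t, 0 <= t -> 0 <= d t.
Hypothesis hdint : forall t, 0 <= t -> mu.-integrable `[0, t]%classic (fun s => (d s)%:E).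

Lemma window_fin (t0 : R) : window t0%:E = `[0, t0]%classic.
Proof.
apply/seteqP; split => x /=; rewrite /window /= in_itv /=.
  by move=> [-> xt]; rewrite -lee_fin.
by move=> /andP[x0 xt]; split => //; rewrite lee_fin.
Qed.

Lemma mW (t0 : R) : measurable (`[0, t0]%classic : set R).
Proof. exact: measurable_itv. Qed.
Arguments mW : clear implicits.

Lemma pol_meas q (hq : is_policy Ebar P E0 d q) k (A : set R) :
  A `<=` [set t | 0 <= t] -> measurable_fun A (q k).
Proof. by move=> A0; apply: measurable_funS (hq.1 k) => //; exact: meas_nonneg. Qed.

Lemma d_meas t0 : 0 <= t0 -> measurable_fun (`[0, t0]%classic : set R) d.
Proof.
move=> t00; have := measurable_int mu (hdint t00).
by move/measurable_EFinP.
Qed.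

Lemma unserved_split q (hq : is_policy Ebar P E0 d q) (t0 : R) : 0 <= t0 ->
  (unserved d q t0%:E + \sum_k \int[mu]_(x in `[0%R, t0]%classic) (q k x)%:E
     = \int[mu]_(x in `[0%R, t0]%classic) (d x)%:E)%E.
Proof.
move=> t00; rewrite /unserved window_fin.
have W0 := @itv_c_sub R 0 t0 (lexx 0).
have mq k : measurable_fun `[0, t0]%classic (fun x => (q k x)%:E).
  by apply/measurable_EFinP; apply: pol_meas.
have q0 k x : `[0, t0]%classic x -> (0 <= (q k x)%:E)%E.
  by move=> /W0 x0; rewrite lee_fin (pol_ge0 _ hq).
rewrite -(@ge0_integral_sum _ _ _ mu _ (mW t0) _ (fun k x => (q k x)%:E) mq q0).
rewrite -(@ge0_integralD _ _ _ mu _ (mW t0)).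
- apply: eq_integral => x /[1!inE] /W0 x0.
  have [_ _ sd] := hq.2 x x0.
  rewrite sumEFin -EFinD; congr EFin.
  by rewrite max_l ?subrK // subr_ge0.
- by move=> x _; rewrite lee_fin le_max lexx orbT.
- apply/measurable_EFinP; apply: measurable_maxr => //.
  have ms : measurable_fun `[0%R, t0]%classic (fun x => \sum_i q i x).
    by apply: measurable_sum => k; apply: pol_meas.
  exact: (measurable_funB (d_meas t00) ms).
- by move=> x /W0 x0; apply: sume_ge0 => k _; rewrite lee_fin (pol_ge0 _ hq).
- by apply: emeasurable_sum => k; apply/measurable_EFinP; apply: pol_meas.
Qed.

Variables (r p : S -> R -> R).
Hypothesis hr : is_ggddf Ebar P E0 d r.
Hypothesis hp : is_policy Ebar P E0 d p.

Lemma int_energy q (hq : is_policy Ebar P E0 d q) k t0 : 0 <= t0 ->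
  (\int[mu]_(x in `[0%R, t0]%classic) (q k x)%:E = (E0 k - energy E0 q k t0)%:E)%E.
Proof.
move=> t00; rewrite /energy opprB addrC subrK /Rintegral fineK //.
apply: (@integrable_fin_num _ _ _ mu _ (mW t0)). exact: (pol_int_itv hP k t0 hq (lexx 0)).
Qed.

Lemma fin_opt t0 : 0 < t0 -> (unserved d r t0%:E <= unserved d p t0%:E)%E.
Proof.
move=> t0pos; have t00 := ltW t0pos.
have hpr := hr.1.
have W0 := @itv_c_sub R 0 t0 (lexx 0).
pose W : set R := `[0%R, t0]%classic.
pose E := energy E0 r.
pose C k := E k t0 <= 0.
pose h t := \sum_k (if C k then 0 else P k - r k t).
have mh : measurable_fun W h.
  apply: measurable_sum => k; case: (C k); first exact: measurable_cst.
  exact: (measurable_funB (measurable_cst _) (pol_meas hpr k W0)).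
pose A := W `&` (h @^-1` [set 0]).
have mA : measurable A := mh (mW t0) _ (measurable_set1 0).
pose Wc := W `\` A.
have mWc : measurable Wc := measurableD (mW t0) mA.
have AW : A `<=` W by move=> x [].
have WAWc : W = A `|` Wc by rewrite setDUK.
have dAWc : [disjoint A & Wc] by rewrite /Wc; apply/disj_setPS => x [? []].
have hterm t k : W t -> 0 <= (if C k then 0 else P k - r k t).
  by move=> /W0 t0'; case: (C k) => //; rewrite subr_ge0 (pol_leP _ hpr).
have hA t : A t -> forall k, ~~ C k -> r k t = P k.
  move=> [Wt /= ht] k Ck; move/eqP: ht; rewrite psumr_eq0; last by move=> j _; exact: hterm.
  move=> /allP /(_ k (mem_index_enum _)) /=; rewrite (negbTE Ck) subr_eq0 => /eqP ->.
  done.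
have [N [mN N0 HN]] := ae_alloc hr.
have hWc t : Wc t -> ~ N t -> \sum_k r k t = d t /\ (forall k, C k -> r k t = 0).
  move=> [Wt nAt] Nt; have t0' := W0 t Wt.
  have ha := HN t t0' Nt.
  have Epos j : ~~ C j -> 0 < E j t.
    rewrite /C -ltNge => Ej; apply: (lt_le_trans Ej); apply: (E_mono hP hpr).
    by move: Wt; rewrite /W /= in_itv /= => /andP[-> ->].
  have [j [Cj rj]] : exists j, ~~ C j /\ r j t != P j.
    apply: contrapT => hn; apply: nAt; split => //=.
    apply: big1 => j _; case: ifP => // /negbT Cj.
    apply/eqP; rewrite subr_eq0 eq_sym; apply: contrapT => /negP rjn.
    by apply: hn; exists j; split.
  split.
    by apply: (alloc_served ha) (Epos j Cj) rj => i; apply: (pol_leP _ hpr).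
  move=> k Ck; apply/eqP; apply: contrapT => /negP rk.
  have rk0 : 0 < r k t by rewrite lt_neqAle eq_sym rk (pol_ge0 _ hpr).
  apply: nAt; split => //=; apply: big1 => i _; case: ifP => // /negbT Ci.
  suff -> : r i t = P i by rewrite subrr.
  apply: (alloc_full ha rk0 (Epos i Ci)).
  apply: (@tie _ _ Ebar P E0 hP d r hr k i t t0).
  - by move: Wt; rewrite /W /= in_itv /=.
  - exact: Ck.
  - by rewrite /C -ltNge in Ci.
have mWt := mW t0.
have W0' : W `<=` [set t | 0 <= t] := W0.
have A0 : A `<=` [set t | 0 <= t] by move=> x /AW /W0.
have Wc0 : Wc `<=` [set t | 0 <= t] by move=> x [/W0].
have mQ q (hq : is_policy Ebar P E0 d q) k (D : set R) : D `<=` [set t | 0 <= t] ->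
    measurable_fun D (fun x => (q k x)%:E).
  by move=> D0; apply/measurable_EFinP; apply: pol_meas.
have Q0 q (hq : is_policy Ebar P E0 d q) k (D : set R) : D `<=` [set t | 0 <= t] ->
    forall x, D x -> (0 <= (q k x)%:E)%E.
  by move=> D0 x /D0 x0; rewrite lee_fin (pol_ge0 _ hq).
have split q (hq : is_policy Ebar P E0 d q) k :
    (\int[mu]_(x in W) (q k x)%:E = \int[mu]_(x in A) (q k x)%:E + \int[mu]_(x in Wc) (q k x)%:E)%E.
  rewrite {1}WAWc; apply: (ge0_integral_setU mu mA mWc) => //.
  - by rewrite -WAWc; apply: mQ.
  - by rewrite -WAWc; apply: Q0.
have sumWc q (hq : is_policy Ebar P E0 d q) :
    (\sum_k \int[mu]_(x in Wc) (q k x)%:E = \int[mu]_(x in Wc) (\sum_k q k x)%:E)%E.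
  rewrite -(@ge0_integral_sum _ _ _ mu _ mWc _ (fun k x => (q k x)%:E)).
  - by apply: eq_integral => x _; rewrite sumEFin.
  - by move=> k; apply: mQ.
  - by move=> k; apply: Q0.
have mdWc : measurable_fun Wc (fun x => (d x)%:E).
  by apply/measurable_EFinP; apply: measurable_funS (d_meas t00) => // x [].
have d0Wc x : Wc x -> (0 <= (d x)%:E)%E by move=> /Wc0 x0; rewrite lee_fin hd0.
have msWc q (hq : is_policy Ebar P E0 d q) :
    measurable_fun Wc (fun x => (\sum_k q k x)%:E).
  by apply/measurable_EFinP; apply: measurable_sum => k; apply: pol_meas.
have s0Wc q (hq : is_policy Ebar P E0 d q) x : Wc x -> (0 <= (\sum_k q k x)%:E)%E.
  by move=> /Wc0 x0; rewrite lee_fin; apply: sumr_ge0 => k _; apply: (pol_ge0 _ hq).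
have rWc : (\int[mu]_(x in Wc) (\sum_k r k x)%:E = \int[mu]_(x in Wc) (d x)%:E)%E.
  apply: (@ge0_ae_eq_integral _ _ _ mu Wc _ _ mWc (msWc _ hpr) mdWc (s0Wc _ hpr) d0Wc).
  exists N; split => // x /= hn; apply: contrapT => Nx; apply: hn => Wcx.
  by rewrite (hWc x Wcx Nx).1.
have rWcC k : C k -> (\int[mu]_(x in Wc) (r k x)%:E = 0)%E.
  move=> Ck; rewrite (@ge0_ae_eq_integral _ _ _ mu Wc _ (cst 0%E) mWc) ?integral0 //.
  - exact: mQ.
  - exact: Q0.
  exists N; split => // x /= hn; apply: contrapT => Nx; apply: hn => Wcx.
  by have -> := (hWc x Wcx Nx).2 k Ck.
have EC k : C k -> E k t0 = 0.
  by move=> Ck; apply/eqP; rewrite eq_le; apply/andP; split; [exact: Ck | exact: (E_ge0 hpr k t00)].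
have rA k : (\int[mu]_(x in A) (r k x)%:E = if C k then (E0 k)%:E else (P k)%:E * mu A)%E.
  case: ifP => Ck.
    have := split _ hpr k; rewrite rWcC // adde0 => <-.
    by rewrite int_energy // -/E EC // subr0.
  rewrite -integral_cst //; apply: eq_integral => x /[1!inE] Ax.
  by rewrite /= hA // Ck.
have pA k : (\int[mu]_(x in A) (p k x)%:E <= if C k then (E0 k)%:E else (P k)%:E * mu A)%E.
  case: ifP => Ck.
    apply: (le_trans (ge0_subset_integral mu mA mWt (mQ _ hp k _ W0') (Q0 _ hp k _ W0') AW)).
    by rewrite int_energy // lee_fin lerBlDr lerDl (E_ge0 hp).
  rewrite -integral_cst //; apply: (ge0_le_integral mu mA) => //.
  - exact: Q0.
  - exact: mQ.
  - by move=> x /A0 x0 /=; rewrite lee_fin (pol_leP _ hp).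
have pWc : (\int[mu]_(x in Wc) (\sum_k p k x)%:E <= \int[mu]_(x in Wc) (d x)%:E)%E.
  apply: (ge0_le_integral mu mWc (s0Wc _ hp) (msWc _ hp) mdWc).
  by move=> x /Wc0 x0; rewrite lee_fin; have [_ _ ->] := hp.2 x x0.
pose B := (\sum_k (if C k then (E0 k)%:E else (P k)%:E * mu A) + \int[mu]_(x in Wc) (d x)%:E)%E.
have SR : (\sum_k \int[mu]_(x in W) (r k x)%:E = B)%E.
  under eq_bigr do rewrite split //.
  by rewrite big_split /= sumWc // rWc; under eq_bigr do rewrite rA.
have SP : (\sum_k \int[mu]_(x in W) (p k x)%:E <= B)%E.
  under eq_bigr do rewrite split //.
  rewrite big_split /= sumWc //; apply: leeD => //.
  by apply: lee_sum => k _; apply: pA.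
have Bfin : B \is a fin_num.
  rewrite fin_numD; apply/andP; split.
    have muA : mu A \is a fin_num.
      rewrite ge0_fin_numE ?measure_ge0 //.
      apply: (le_lt_trans _ (mu_itv_fin 0 t0)).
      by apply: le_measure => //; rewrite inE.
    by apply/sum_fin_numP => k _ _; case: ifP => // _; rewrite fin_numM.
  apply: (@integrable_fin_num _ _ _ mu _ mWc); apply: integrableS (hdint t00) => //.
  by move=> x [].
have ur := unserved_split hpr t00; have up := unserved_split hp t00.
rewrite -/W in ur up.
rewrite SR in ur.
rewrite -(leeD2rE _ _ Bfin) ur -up.
by apply: leeD2l.
Qed.

Lemma fq_meas q (hq : is_policy Ebar P E0 d q) t0 : 0 <= t0 ->
  measurable_fun (`[0%R, t0]%classic : set R)
    (fun x => (Num.max (d x - \sum_i q i x) 0)%:E).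
Proof.
move=> t00; have W0 := @itv_c_sub R 0 t0 (lexx 0).
apply/measurable_EFinP; apply: measurable_maxr => //.
have ms : measurable_fun `[0%R, t0]%classic (fun x => \sum_i q i x).
  by apply: measurable_sum => k; apply: pol_meas.
exact: (measurable_funB (d_meas t00) ms).
Qed.

Lemma inf_opt : (unserved d r +oo <= unserved d p +oo)%E.
Proof.
pose F n : set R := `[0%R, n.+1%:R]%classic.
have nndF : {homo F : n m / (n <= m)%N >-> (n <= m)%O}.
  move=> n m nm; rewrite subsetEset => x; rewrite /F /= !in_itv /= => /andP[-> xn] /=.
  by apply: (le_trans xn); rewrite ler_nat.
have mF n : measurable (F n) by exact: measurable_itv.
have eqU : \bigcup_n F n = window +oo.
  apply/seteqP; split => x /=.
    by move=> [n _]; rewrite /F /= in_itv /= => /andP[x0 _]; split => //; rewrite leey.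
  move=> [x0 _]; have [n xn] : exists n : nat, x <= n.+1%:R.
    by exists (Num.trunc x); apply: ltW; rewrite -truncn_lt_nat.
  by exists n => //; rewrite /F /= in_itv /= x0.
have cv q (hq : is_policy Ebar P E0 d q) :=
  @ge0_nondecreasing_set_cvg_integral _ (measurableTypeR R) _ F
    (fun x => (Num.max (d x - \sum_i q i x) 0)%:E) mu nndF mF
    (fun n => fq_meas hq (ler0n _ n.+1))
    (fun n x _ => ltac:(by rewrite lee_fin le_max lexx orbT)).
rewrite /unserved -eqU -(cvg_lim _ (cv _ hr.1)) // -(cvg_lim _ (cv _ hp)) //.
apply: lee_lim; [by apply/cvg_ex; eexists; exact: cv hr.1 |
                 by apply/cvg_ex; eexists; exact: cv hp |].
near=> n.
have := fin_opt (ltr0Sn _ n); rewrite /unserved window_fin //.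
Unshelve. all: by end_near.
Qed.
End Main.

Unset Implicit Arguments.

Theorem corollary2 (R : realType) (S : finType) (Ebar P E0 : S -> R)
  (hEbar : forall i, 0 < Ebar i) (hP : forall i, 0 < P i)
  (hE0 : forall i, 0 <= E0 i <= Ebar i)
  (d : measure_display) (Om : measurableType d) (Pr : probability Om R)
  (D : Om -> R -> R)
  (hDnn : forall w t, 0 <= t -> 0 <= D w t)
  (hDloc : forall w t, 0 <= t ->
     (@lebesgue_measure R).-integrable `[0, t] (fun s => (D w s)%:E))
  (T : \bar R) (hT : (0 < T)%E)
  (g : Om -> S -> R -> R)
  (hg : forall w, is_ggddf Ebar P E0 (D w) (g w)) :
  (forall (dt : R) (E : S -> R), 0 <= dt ->
     (exists r, ggddf_alloc P dt E r) /\
     (forall r r', ggddf_alloc P dt E r -> ggddf_alloc P dt E r' ->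
        forall i, r i = r' i)) /\
  (forall pi : Om -> S -> R -> R,
     (forall w, is_policy Ebar P E0 (D w) (pi w)) ->
     (forall w w' t, 0 <= t ->
        (forall s, 0 <= s <= t -> D w s = D w' s) ->
        forall i, pi w i t = pi w' i t) ->
     let UG := fun w => unserved (D w) (g w) T in
     let Upi := fun w => unserved (D w) (pi w) T in
     {ae Pr, forall w, (UG w <= Upi w)%E} /\
     (measurable_fun setT UG -> measurable_fun setT Upi ->
        (\int[Pr]_w UG w <= \int[Pr]_w Upi w)%E /\
        (forall q : R, 0 < q < 1 -> (quantile Pr UG q <= quantile Pr Upi q)%E))).
Proof.
split.
  move=> dt E dt0; split; first exact: (@alloc_exists R S P hP dt E dt0).
  by move=> r r' h h'; apply: (@alloc_unique R S P hP dt E r r' h h').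
move=> pi hpi _.
have pw w : (unserved (D w) (g w) T <= unserved (D w) (pi w) T)%E.
  case: T hT => [t| |] //.
  - by rewrite lte_fin => t0; apply: (fin_opt hP (hDnn w) (hDloc w) (hg w) (hpi w) t0).
  - by move=> _; apply: (inf_opt hP (hDnn w) (hDloc w) (hg w) (hpi w)).
move=> UG Upi.
have UG0 w : (0 <= UG w)%E.
  by apply: integral_ge0 => x _; rewrite lee_fin le_max lexx orbT.
split; first exact: aeW.
move=> mUG mUpi; split.
  apply: (ge0_le_integral Pr measurableT (fun w _ => UG0 w) mUG mUpi).
  by move=> w _; apply: pw.
move=> q _; rewrite /quantile.
apply: le_ereal_inf_tmp => _ [x Sx <-].
apply: ereal_inf_lbound; exists x => //=.
apply: (le_trans Sx); apply: le_measure.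
- rewrite inE; have := measurable_lee measurableT mUpi (measurable_cst x%:E).
  by rewrite setTI.
- rewrite inE; have := measurable_lee measurableT mUG (measurable_cst x%:E).
  by rewrite setTI.
- by move=> w /= h; apply: le_trans (pw w) h.
Qed.
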